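(* Let $R$ be a ring with identity, ${}_RM$ a finitely generated semisimple left $R$-module, $\varphi:M\to M$ a nilpotent $R$-endomorphism, and $\{x_{\gamma,i}\mid\gamma\in\Gamma,1\le i\le k_\gamma\}$ a nilpotent Jordan normal base of ${}_RM$ with respect to $\varphi$, with $\Gamma$ finite. Let $\Phi:(R[t])^\Gamma\to M$, $\Phi(\mathbf f)=\sum_{\gamma\in\Gamma}f_\gamma(t)\ast x_{\gamma,1}$, and \[\mathcal M(\Phi)=\{\mathbf P\in M_{\Gamma\times\Gamma}(R[t])\mid \mathbf f\mathbf P\in\ker(\Phi)\text{ for all }\mathbf f\in\ker(\Phi)\}.\] Then $\mathcal M(\Phi)$ is a $Z(R)$-subalgebra of $M_{\Gamma\times\Gamma}(R[t])$. For $\mathbf P\in\mathcal M(\Phi)$, the formula $\psi_{\mathbf P}(\Phi(\mathbf f))=\Phi(\mathbf f\mathbf P)$ ($\mathbf f\in(R[t])^\Gamma$) properly defines an $R$-endomorphism $\psi_{\mathbf P}:M\to M$ with $\psi_{\mathbf P}\circ\varphi=\varphi\circ\psi_{\mathbf P}$, and the assignment $\mathbf P\mapsto\psi_{\mathbf P}$ is a homomorphism of $Z(R)$-algebras $\mathcal M(\Phi)^{\mathrm{op}}\to C_\varphi$.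
   Context: A nilpotent Jordan normal base of ${}_RM$ with respect to $\varphi$ is a subset $\{x_{\gamma,i}\}$ (integers $k_\gamma\ge1$) such that each $Rx_{\gamma,i}$ is simple, $M=\bigoplus_{\gamma,i}Rx_{\gamma,i}$, $\varphi(x_{\gamma,i})=x_{\gamma,i+1}$ for $i<k_\gamma$, $\varphi(x_{\gamma,k_\gamma})=0$. $R[t]$ is the polynomial ring in a commuting indeterminate; $M$ is a left $R[t]$-module via $(a_1+a_2t+\cdots+a_{n+1}t^n)\ast u=a_1u+a_2\varphi(u)+\cdots+a_{n+1}\varphi^n(u)$. Elements of $(R[t])^\Gamma$ are viewed as $1\times\Gamma$ row vectors (after fixing a linear order on $\Gamma$) and $\mathbf f\mathbf P$ is the matrix product. $Z(R)$ is the centre of $R$, and $C_\varphi=\{\psi\in\mathrm{Hom}_R(M,M)\mid\psi\circ\varphi=\varphi\circ\psi\}$. *)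

(* Defs.v *)
From HB Require Import structures.
From mathcomp Require Import all_boot all_order all_algebra.
Set Implicit Arguments. Unset Strict Implicit. Unset Printing Implicit Defensive.
Import GRing.Theory.
Local Open Scope ring_scope.

Section Defs.
Variables (R : nzRingType) (M : lmodType R).

Definition submodule (S : M -> Prop) :=
  [/\ S 0, (forall u v, S u -> S v -> S (u + v)) & (forall r u, S u -> S (r *: u))].

Definition Rspan (x : M) : M -> Prop := fun u => exists r : R, u = r *: x.

Definition simple_Rspan (x : M) :=
  (exists u, Rspan x u /\ u <> 0) /\
  forall S, submodule S -> (forall u, S u -> Rspan x u) ->
    (forall u, S u -> u = 0) \/ (forall u, Rspan x u -> S u).

Definition semisimple :=
  forall S, submodule S -> exists T, submodule T /\
    (forall u, S u -> T u -> u = 0) /\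
    (forall u, exists a b, [/\ S a, T b & u = a + b]).

Definition fin_gen :=
  exists (m : nat) (g : 'I_m -> M), forall u, exists c : 'I_m -> R,
    u = \sum_(i < m) c i *: g i.

Definition nilpotent_endo (phi : M -> M) := exists m, forall u, iter m phi u = 0.

(* The R[t]-action on M via phi: (sum a_i t^i) * u = sum a_i phi^i(u). *)
Definition poly_act (phi : M -> M) (p : {poly R}) (u : M) : M :=
  \sum_(i < size p) p`_i *: iter i phi u.

(* Nilpotent Jordan normal base {x_(g,i) | g in 'I_n, 0 <= i < k g}
   (indices i shifted by one w.r.t. the paper: x g 0 is x_(g,1)). *)
Definition jordan_base (phi : M -> M) (n : nat) (k : 'I_n -> nat)
    (x : 'I_n -> nat -> M) :=
  [/\ (forall g, 0 < k g)%N,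
      (forall g i, (i < k g)%N -> simple_Rspan (x g i)) &
  [/\
      (forall g i, (i.+1 < k g)%N -> phi (x g i) = x g i.+1),
      (forall g, phi (x g (k g).-1) = 0),
      (forall u, exists c : 'I_n -> nat -> M,
          (forall g i, (i < k g)%N -> Rspan (x g i) (c g i)) /\
          u = \sum_(g < n) \sum_(i < k g) c g i) &
      (forall c : 'I_n -> nat -> M,
          (forall g i, (i < k g)%N -> Rspan (x g i) (c g i)) ->
          \sum_(g < n) \sum_(i < k g) c g i = 0 ->
          forall g i, (i < k g)%N -> c g i = 0)]].

Definition PhiMap (phi : M -> M) (n : nat) (x : 'I_n -> nat -> M)
    (f : 'rV[{poly R}]_n) : M :=
  \sum_(g < n) poly_act phi (f 0 g) (x g 0%N).

Definition MPhi (phi : M -> M) (n : nat) (x : 'I_n -> nat -> M)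
    (P : 'M[{poly R}]_n) : Prop :=
  forall f : 'rV[{poly R}]_n, PhiMap phi x f = 0 -> PhiMap phi x (f *m P) = 0.

Definition is_psi (phi : M -> M) (n : nat) (x : 'I_n -> nat -> M)
    (P : 'M[{poly R}]_n) (psi : M -> M) : Prop :=
  forall f : 'rV[{poly R}]_n, psi (PhiMap phi x f) = PhiMap phi x (f *m P).

End Defs.

Definition central (R : nzRingType) (z : R) := forall r : R, z * r = r * z.

(* Main.v *)
Require Import Defs.
From HB Require Import structures.
From mathcomp Require Import all_boot all_order all_algebra.
From mathcomp Require Import zify.
Import GRing.Theory.
Local Open Scope ring_scope.

Section Aux.
Variables (R : nzRingType) (M : lmodType R) (phi : {linear M -> M}).

Lemma poly_act_big (m : nat) (p : {poly R}) u : (size p <= m)%N ->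
  poly_act phi p u = \sum_(i < m) p`_i *: iter i phi u.
Proof.
move=> H; rewrite /poly_act (big_ord_widen m (fun i => p`_i *: iter i phi u) H).
rewrite big_mkcond; apply: eq_bigr => i _; case: ifP => // /negbT.
by rewrite -leqNgt => /(nth_default 0) ->; rewrite scale0r.
Qed.

Lemma poly_actD p q u : poly_act phi (p + q) u = poly_act phi p u + poly_act phi q u.
Proof.
set N := (size (p + q)%R + size p + size q)%N.
rewrite !(poly_act_big N) /N; try lia.
by rewrite -big_split; apply: eq_bigr => i _; rewrite coefD scalerDl.
Qed.

Lemma poly_actC r p u : poly_act phi (r%:P * p) u = r *: poly_act phi p u.
Proof.
set N := (size (r%:P * p)%R + size p)%N.
rewrite !(poly_act_big N) /N; try lia.
by rewrite scaler_sumr; apply: eq_bigr => i _; rewrite coefCM scalerA.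
Qed.

Lemma poly_actX p u : poly_act phi ('X * p) u = phi (poly_act phi p u).
Proof.
set N := (size ('X * p)%R + size p)%N.
rewrite (poly_act_big N.+1) /N; last lia.
rewrite (poly_act_big N) /N; last lia.
rewrite big_ord_recl coefXM /= scale0r add0r linear_sum.
apply: eq_bigr => i _; rewrite coefXM /= linearZ /=.
by rewrite add0n.
Qed.

Lemma poly_act0 u : poly_act phi 0 u = 0.
Proof. by rewrite /poly_act size_poly0 big_ord0. Qed.

Variables (n : nat) (x : 'I_n -> nat -> M).

Lemma PhiD f g : PhiMap phi x (f + g) = PhiMap phi x f + PhiMap phi x g.
Proof. by rewrite /PhiMap -big_split; apply: eq_bigr => i _; rewrite mxE poly_actD. Qed.

Lemma Phi0 : PhiMap phi x 0 = 0.
Proof. by rewrite /PhiMap big1 // => i _; rewrite mxE poly_act0. Qed.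

Lemma PhiN f : PhiMap phi x (- f) = - PhiMap phi x f.
Proof. by apply/eqP; rewrite -subr_eq0 opprK addrC -PhiD subrr Phi0. Qed.

Lemma PhiC r f : PhiMap phi x (r%:P *: f) = r *: PhiMap phi x f.
Proof. by rewrite /PhiMap scaler_sumr; apply: eq_bigr => i _; rewrite mxE poly_actC. Qed.

Lemma PhiX f : PhiMap phi x ('X *: f) = phi (PhiMap phi x f).
Proof. by rewrite /PhiMap linear_sum; apply: eq_bigr => i _; rewrite mxE poly_actX. Qed.

Lemma Phi_surj (k : 'I_n -> nat) : jordan_base phi k x ->
  forall u, exists f, PhiMap phi x f = u.
Proof.
case=> _ _ [Hs _ Hsp _] u.
have [c [Hc ->]] := Hsp u.
have Hr : forall g i, exists r : R, (i < k g)%N ==> (c g i == r *: x g i).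
  move=> g i; case: (ltnP i (k g)) => H.
    by have [r Hr] := Hc g i H; exists r; apply/implyP => _; rewrite Hr.
  exists 0; apply/implyP; move=> H'; exfalso; lia.
have [r Hr'] : exists r : 'I_n -> nat -> R,
    forall g i, (i < k g)%N -> c g i = r g i *: x g i.
  exists (fun g i => xchoose (Hr g i)) => g i Hi.
  by move/implyP: (xchooseP (Hr g i)) => /(_ Hi) /eqP.
have Hx : forall g i, (i < k g)%N -> iter i phi (x g 0%N) = x g i.
  move=> g; elim=> [//|i IH] Hi /=; rewrite IH; last lia.
  by apply: Hs.
exists (\row_(g < n) (poly (k g) (r g) : {poly R})).
rewrite /PhiMap; apply: eq_bigr => g _; rewrite mxE.
rewrite (poly_act_big (k g)); last exact: size_poly.
apply: eq_bigr => i _; rewrite coef_poly (ltn_ord i) Hx //.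
by rewrite Hr'.
Qed.

End Aux.

Lemma central_poly (R : nzRingType) (z : R) : central z ->
  forall p : {poly R}, z%:P * p = p * z%:P.
Proof. by move=> Hz p; apply/polyP => i; rewrite coefCM coefMC Hz. Qed.

Lemma mulmx_scale_central (R : nzRingType) (c : R) m n p
   (A : 'M[R]_(m, n)) (B : 'M[R]_(n, p)) :
  (forall r, c * r = r * c) -> A *m (c *: B) = c *: (A *m B).
Proof.
move=> Hc; apply/matrixP => i j; rewrite !mxE mulr_sumr.
by apply: eq_bigr => l _; rewrite mxE mulrA -Hc mulrA.
Qed.

Theorem lemma4p1 (R : nzRingType) (M : lmodType R) (phi : {linear M -> M})
    (n : nat) (k : 'I_n -> nat) (x : 'I_n -> nat -> M) :
  fin_gen M -> semisimple M -> nilpotent_endo phi -> jordan_base phi k x ->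
  [/\
   (* M(Phi) is a Z(R)-subalgebra of M_{Gamma x Gamma}(R[t]) *)
   [/\ MPhi phi x 1%:M, MPhi phi x 0 &
   [/\
       (forall P Q, MPhi phi x P -> MPhi phi x Q -> MPhi phi x (P + Q)),
       (forall P, MPhi phi x P -> MPhi phi x (- P)),
       (forall P Q, MPhi phi x P -> MPhi phi x Q -> MPhi phi x (P *m Q)) &
       (forall (z : R) P, central z -> MPhi phi x P -> MPhi phi x (z%:P *: P))]],
   (* psi_P is well defined, R-linear and commutes with phi *)
   (forall P, MPhi phi x P ->
      (exists psi : M -> M, [/\ is_psi phi x P psi,
          (forall (r : R) u v, psi (r *: u + v) = r *: psi u + psi v) &
          (forall u, psi (phi u) = phi (psi u))]) /\
      (forall psi1 psi2, is_psi phi x P psi1 -> is_psi phi x P psi2 ->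
          psi1 =1 psi2)) &
   (* P |-> psi_P is a Z(R)-algebra homomorphism M(Phi)^op -> C_phi *)
   is_psi phi x 1%:M id /\
   (forall P Q psiP psiQ, MPhi phi x P -> MPhi phi x Q ->
      is_psi phi x P psiP -> is_psi phi x Q psiQ ->
      [/\ is_psi phi x (P + Q) (fun u => psiP u + psiQ u),
          is_psi phi x (P *m Q) (fun u => psiQ (psiP u)) &
          (forall z : R, central z ->
             is_psi phi x (z%:P *: P) (fun u => z *: psiP u))])].
Proof.
move=> _ _ _ Hjb.
have Hsurj := @Phi_surj _ _ phi n x k Hjb.
have Zc : forall z : R, central z -> forall (f : 'rV_n) (P : 'M_n),
    f *m (z%:P *: P) = z%:P *: (f *m P).
  by move=> z Hz f P; apply: mulmx_scale_central; apply: central_poly.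
split.
- split.
  + by move=> f; rewrite mulmx1.
  + by move=> f _; rewrite mulmx0 Phi0.
  split.
  + by move=> P Q HP HQ f Hf; rewrite mulmxDr PhiD HP // HQ // addr0.
  + by move=> P HP f Hf; rewrite mulmxN PhiN HP // oppr0.
  + by move=> P Q HP HQ f Hf; rewrite mulmxA HQ // HP.
  + by move=> z P Hz HP f Hf; rewrite Zc // PhiC HP // scaler0.
- move=> P HP.
  have wd : forall f g, PhiMap phi x f = PhiMap phi x g ->
      PhiMap phi x (f *m P) = PhiMap phi x (g *m P).
    move=> f g E; apply/eqP; rewrite -subr_eq0 -PhiN -PhiD -mulNmx -mulmxDl.
    by rewrite HP // PhiD PhiN E subrr.
  split.
  + have Hsb : forall u, exists f, PhiMap phi x f == u.
      by move=> u; have [f Hf] := Hsurj u; exists f; apply/eqP.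
    pose psi u := PhiMap phi x (xchoose (Hsb u) *m P).
    have Hpsi : is_psi phi x P psi.
      by move=> f; rewrite /psi; apply: wd; rewrite (eqP (xchooseP (Hsb _))).
    exists psi; split=> //.
    * move=> r u v; have [f <-] := Hsurj u; have [g <-] := Hsurj v.
      by rewrite -PhiC -PhiD !Hpsi mulmxDl -scalemxAl PhiD PhiC.
    * move=> u; have [f <-] := Hsurj u.
      by rewrite -PhiX !Hpsi -scalemxAl PhiX.
  + move=> psi1 psi2 H1 H2 u; have [f <-] := Hsurj u.
    by rewrite H1 H2.
- split.
  + by move=> f; rewrite mulmx1.
  + move=> P Q psiP psiQ HP HQ HpP HpQ; split.
    * by move=> f; rewrite HpP HpQ mulmxDr PhiD.
    * by move=> f; rewrite HpP HpQ mulmxA.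
    * by move=> z Hz f; rewrite HpP Zc // PhiC.
Qed.
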